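(* Let $\bm{\mathcal{X}}\in\mathbb{R}^{n\times r\times k}$, $\bm{\mathcal{U}}_t\in\mathbb{R}^{n\times R\times k}$ and $\bm{\mathcal{U}}_{t+1}=[\bm{\mathcal{I}}+\mu(\mathcal{A}^*\mathcal{A})(\bm{\mathcal{X}}*\bm{\mathcal{X}}^\top-\bm{\mathcal{U}}_t*\bm{\mathcal{U}}_t^\top)]*\bm{\mathcal{U}}_t$. Assume $\|\bm{\mathcal{U}}_t\|\le 3\|\bm{\mathcal{X}}\|$, $\mu\le\frac{1}{27}\|\bm{\mathcal{X}}\|^{-2}$, and $\|(\mathcal{A}^*\mathcal{A}-\mathcal{I})(\bm{\mathcal{X}}*\bm{\mathcal{X}}^\top-\bm{\mathcal{U}}_t*\bm{\mathcal{U}}_t^\top)\|\le\|\bm{\mathcal{X}}\|^2$. Then $\|\bm{\mathcal{U}}_{t+1}\|\le 3\|\bm{\mathcal{X}}\|$.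
   Context: All tensors are real third-order with third mode of length $k$. The t-product $*$ is tube-wise circular convolution: $(\bm{\mathcal{A}}*\bm{\mathcal{B}})(i,i',:)=\sum_p\bm{\mathcal{A}}(i,p,:)\circledast\bm{\mathcal{B}}(p,i',:)$; equivalently, with Fourier slices $\overline{\bm{\mathcal{T}}}^{(j)}(i,i')=\sum_{j'}\bm{\mathcal{T}}(i,i',j')e^{-\sqrt{-1}\,2\pi(j-1)(j'-1)/k}$ and $\overline{\bm{\mathcal{T}}}=\mathrm{blockdiag}(\overline{\bm{\mathcal{T}}}^{(j)})_j$, $\overline{\bm{\mathcal{A}}*\bm{\mathcal{B}}}=\overline{\bm{\mathcal{A}}}\,\overline{\bm{\mathcal{B}}}$. The transpose transposes each frontal slice and reverses slices $2,\dots,k$. $\bm{\mathcal{I}}$ is the identity tensor, $\mathcal{I}$ the identity operator. $\|\bm{\mathcal{T}}\|=\|\overline{\bm{\mathcal{T}}}\|$. $\mathcal{A}^*\mathcal{A}(\bm{\mathcal{Z}})=\sum_i\langle\bm{\mathcal{A}}_i,\bm{\mathcal{Z}}\rangle\bm{\mathcal{A}}_i$ for fixed tubal-symmetric $\bm{\mathcal{A}}_i\in\mathbb{R}^{n\times n\times k}$, with $\langle\cdot,\cdot\rangle$ the entrywise inner product. *)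

(* Defs.v *)
From mathcomp Require Import all_boot all_algebra.
From mathcomp Require Import complex.
From mathcomp Require Import all_classical all_reals all_analysis.
Set Implicit Arguments. Unset Strict Implicit. Unset Printing Implicit Defensive.
Import GRing.Theory Num.Theory.
Local Open Scope ring_scope.

Section Tensors.
Variable R : realType.

(* A real third-order tensor of size n x m x k, given by its k frontal
   slices: T j i i' = T(i,i',j) (indices are 0-based). *)
Definition tensor (n m k : nat) := 'I_k -> 'M[R]_(n, m).

Lemma ord_pos (k : nat) (j : 'I_k) : (0 < k)%N.
Proof. exact: leq_ltn_trans (leq0n j) (ltn_ord j). Qed.

Definition circsub (k : nat) (j l : 'I_k) : 'I_k :=
  Ordinal (ltn_pmod (j + k - l) (ord_pos j)).
Definition circneg (k : nat) (j : 'I_k) : 'I_k :=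
  Ordinal (ltn_pmod (k - j) (ord_pos j)).

Definition tprod (n p q k : nat) (A : tensor n p k) (B : tensor p q k)
  : tensor n q k :=
  fun j => \sum_(l < k) A l *m B (circsub j l).

(* transpose: transpose each frontal slice and reverse slices 2..k *)
Definition ttr (n m k : nat) (A : tensor n m k) : tensor m n k :=
  fun j => (A (circneg j))^T.

Definition tid (n k : nat) : tensor n n k :=
  fun j => if nat_of_ord j == 0%N then 1%:M else 0.

Definition tadd (n m k : nat) (A B : tensor n m k) : tensor n m k :=
  fun j => A j + B j.
Definition tsub (n m k : nat) (A B : tensor n m k) : tensor n m k :=
  fun j => A j - B j.
Definition tscale (n m k : nat) (a : R) (A : tensor n m k) : tensor n m k :=
  fun j => a *: A j.

Definition tinner (n m k : nat) (A B : tensor n m k) : R :=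
  \sum_(j < k) \sum_(i < n) \sum_(i' < m) A j i i' * B j i i'.

Definition AstarA (m n k : nat) (As : 'I_m -> tensor n n k)
  (Z : tensor n n k) : tensor n n k :=
  fun j => \sum_(i < m) tinner (As i) Z *: As i j.

Definition tsym (n k : nat) (A : tensor n n k) : Prop := ttr A = A.

(* e^{-sqrt(-1) 2 pi t / k} *)
Definition omega (k t : nat) : R[i] :=
  Complex (cos (2 * pi * t%:R / k%:R)) (- sin (2 * pi * t%:R / k%:R)).

(* Fourier slice  Tbar^(j)(i,i') = sum_j' T(i,i',j') e^{-sqrt(-1) 2pi j j'/k}
   (0-based indices j, j') *)
Definition fslice (n p k : nat) (T : tensor n p k) (j : 'I_k)
  : 'I_n -> 'I_p -> R[i] :=
  fun i i' => \sum_(j' < k) real_complex R (T j' i i') * omega k (j * j').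

(* Tbar = blockdiag(Tbar^(j))_j, as a matrix indexed by ('I_k * 'I_n) x ('I_k * 'I_p) *)
Definition tbar (n p k : nat) (T : tensor n p k)
  : ('I_k * 'I_n)%type -> ('I_k * 'I_p)%type -> R[i] :=
  fun a b => if a.1 == b.1 then fslice T a.1 a.2 b.2 else 0.

Definition cnorm2 (I : finType) (v : I -> R[i]) : R :=
  \sum_(x : I) ((@complex.Re R (v x)) ^+ 2 + (@complex.Im R (v x)) ^+ 2).

Definition opnorm (I J : finType) (M : I -> J -> R[i]) : R :=
  sup [set x : R | exists v : J -> R[i],
         cnorm2 v <= 1 /\ x = Num.sqrt (cnorm2 (fun a => \sum_(b : J) M a b * v b))].

Definition tnorm (n p k : nat) (T : tensor n p k) : R := opnorm (tbar T).

End Tensors.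

(* Main.v *)
Require Import Defs.
From mathcomp Require Import all_boot all_algebra.
From mathcomp Require Import complex.
From mathcomp Require Import all_classical all_reals all_analysis.
From mathcomp Require Import ring lra.
Import mathcomp.order.order.Order.TTheory GRing.Theory Num.Theory.
Local Open Scope ring_scope.
Set Implicit Arguments. Unset Strict Implicit. Unset Printing Implicit Defensive.

Section Lin.
Variable R : realType.
Notation C := (R[i]).
Local Notation Re := (@complex.Re R).
Local Notation Im := (@complex.Im R).
Lemma ReD (x y : C) : Re (x + y) = Re x + Re y. Proof. by case: x; case: y. Qed.
Lemma ImD (x y : C) : Im (x + y) = Im x + Im y. Proof. by case: x; case: y. Qed.
Lemma ReM (x y : C) : Re (x * y) = Re x * Re y - Im x * Im y. Proof. by case: x; case: y => c d a b; reflexivity. Qed.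
Lemma ImM (x y : C) : Im (x * y) = Re x * Im y + Im x * Re y. Proof. case: x; case: y => c d a b /=; transitivity (a * d + b * c); [reflexivity|ring]. Qed.
Lemma Re0 : Re (0 : C) = 0. Proof. by []. Qed.
Lemma Im0 : Im (0 : C) = 0. Proof. by []. Qed.
Lemma Re_sum (I : finType) (F : I -> C) : Re (\sum_i F i) = \sum_i Re (F i).
Proof. by apply: (big_morph _ ReD Re0). Qed.
Lemma Im_sum (I : finType) (F : I -> C) : Im (\sum_i F i) = \sum_i Im (F i).
Proof. by apply: (big_morph _ ImD Im0). Qed.
Lemma ReN (x : C) : Re (- x) = - Re x. Proof. by case: x. Qed.
Lemma ImN (x : C) : Im (- x) = - Im x. Proof. by case: x. Qed.
Lemma ReC (x : R) : Re ((real_complex R x)) = x. Proof. by []. Qed.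
Lemma ImC (x : R) : Im ((real_complex R x)) = 0. Proof. by []. Qed.
Lemma Reconj (x : C) : Re (conjc x) = Re x. Proof. by case: x. Qed.
Lemma Imconj (x : C) : Im (conjc x) = - Im x. Proof. by case: x. Qed.

Definition ip (I : finType) (u w : I -> C) : R :=
  \sum_a (Re (u a) * Re (w a) + Im (u a) * Im (w a)).
Definition nv (I : finType) (v : I -> C) : R := Num.sqrt (cnorm2 v).
Definition vadd (I : finType) (u w : I -> C) : I -> C := fun a => u a + w a.
Definition vsc (I : finType) (t : R) (u : I -> C) : I -> C := fun a => (real_complex R t) * u a.
Definition mapp (I J : finType) (M : I -> J -> C) (v : J -> C) : I -> C :=
  fun a => \sum_b M a b * v b.
Definition cadj (I J : finType) (M : I -> J -> C) : J -> I -> C :=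
  fun b a => conjc (M a b).

Lemma cnorm2E (I : finType) (v : I -> C) : cnorm2 v = ip v v.
Proof. by apply: eq_bigr => a _; rewrite !expr2. Qed.

Lemma ipC (I : finType) (u w : I -> C) : ip u w = ip w u.
Proof. by apply: eq_bigr => a _; ring. Qed.

Lemma ip_ge0 (I : finType) (u : I -> C) : 0 <= ip u u.
Proof. by apply: sumr_ge0 => a _; rewrite addr_ge0 // -expr2 sqr_ge0. Qed.

Lemma ipDl (I : finType) (u1 u2 w : I -> C) : ip (vadd u1 u2) w = ip u1 w + ip u2 w.
Proof. rewrite /ip -big_split /=; apply: eq_bigr => a _; rewrite /vadd ReD ImD; ring. Qed.

Lemma ipZl (I : finType) t (u w : I -> C) : ip (vsc t u) w = t * ip u w.
Proof. rewrite /ip mulr_sumr; apply: eq_bigr => a _; rewrite /vsc ReM ImM /=; ring. Qed.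

Lemma ipDr (I : finType) (u w1 w2 : I -> C) : ip u (vadd w1 w2) = ip u w1 + ip u w2.
Proof. by rewrite ipC ipDl !(ipC u). Qed.
Lemma ipZr (I : finType) t (u w : I -> C) : ip u (vsc t w) = t * ip u w.
Proof. by rewrite ipC ipZl ipC. Qed.

Lemma disc (a b c : R) : 0 <= c -> (forall t, 0 <= a - 2 * t * b + t ^+ 2 * c) -> b ^+ 2 <= a * c.
Proof.
move=> c0 H; have a0 : 0 <= a by have := H 0; rewrite expr0n /=; lra.
have [ce|cn0] := eqVneq c 0.
  rewrite ce; move: H; rewrite ce => H.
  have [->|bn0] := eqVneq b 0; first by rewrite expr0n /= mulr0.
  have := H ((a + 1) / (2 * b)); rewrite mulr0.
  have -> : 2 * ((a + 1) / (2 * b)) * b = a + 1.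
    by field; rewrite bn0.
  lra.
have cp : 0 < c by rewrite lt0r cn0.
have := H (b / c).
have -> : a - 2 * (b / c) * b + (b / c) ^+ 2 * c = (a * c - b ^+ 2) / c by field.
by rewrite pmulr_lge0 ?invr_gt0 // subr_ge0.
Qed.

Lemma CS (I : finType) (u w : I -> C) : ip u w ^+ 2 <= ip u u * ip w w.
Proof.
apply: disc; first exact: ip_ge0.
move=> t.
have := ip_ge0 (vadd u (vsc (- t) w)).
rewrite !ipDl !ipDr !ipZl !ipZr (ipC w u).
suff -> : ip u u + - t * ip u w + (- t * ip u w + - t * (- t * ip w w)) = ip u u - 2 * t * ip u w + t ^+ 2 * ip w w by [].
ring.
Qed.

Lemma nv_ge0 (I : finType) (u : I -> C) : 0 <= nv u. Proof. exact: sqrtr_ge0. Qed.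
Lemma nv_sqr (I : finType) (u : I -> C) : nv u ^+ 2 = ip u u.
Proof. by rewrite /nv sqr_sqrtr cnorm2E // ip_ge0. Qed.

Lemma sqrt_le (x s : R) : 0 <= s -> x <= s ^+ 2 -> Num.sqrt x <= s.
Proof. by move=> s0 h; rewrite -(ger0_norm s0) -sqrtr_sqr ler_sqrt // sqr_ge0. Qed.

Lemma le_nv (I : finType) (u : I -> C) s : 0 <= s -> ip u u <= s ^+ 2 -> nv u <= s.
Proof. by move=> s0 h; rewrite /nv cnorm2E sqrt_le. Qed.

Lemma CS' (I : finType) (u w : I -> C) : ip u w <= nv u * nv w.
Proof.
apply: le_trans (ler_norm _) _.
rewrite -sqrtr_sqr /nv -sqrtrM; last by rewrite cnorm2E ip_ge0.
by rewrite ler_sqrt ?mulr_ge0 // ?cnorm2E ?ip_ge0 // CS.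
Qed.

Lemma nv_tri (I : finType) (u w : I -> C) : nv (vadd u w) <= nv u + nv w.
Proof.
apply: le_nv; first by rewrite addr_ge0 ?nv_ge0.
rewrite ipDl !ipDr (ipC w u) sqrrD !nv_sqr.
have := CS' u w; lra.
Qed.

Lemma nvZ (I : finType) t (u : I -> C) : nv (vsc t u) = `|t| * nv u.
Proof.
rewrite /nv !cnorm2E ipZl ipZr mulrA -expr2 sqrtrM ?sqr_ge0 //.
by rewrite sqrtr_sqr.
Qed.


Section Op.
Variables (I J : finType).
Implicit Types (M : I -> J -> C) (v : J -> C).

Lemma Re_mapp M v a : Re (mapp M v a) = ip (fun b => conjc (M a b)) v.
Proof. rewrite /mapp Re_sum; apply: eq_bigr => b _; rewrite ReM Reconj Imconj; ring. Qed.

Lemma Im_mapp M v a : Im (mapp M v a) = ip (fun b => Complex (Im (M a b)) (Re (M a b))) v.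
Proof. rewrite /mapp Im_sum; apply: eq_bigr => b _; rewrite ImM /=; ring. Qed.

Definition Kb M : R := \sum_a (ip (fun b => conjc (M a b)) (fun b => conjc (M a b))
   + ip (fun b => Complex (Im (M a b)) (Re (M a b))) (fun b => Complex (Im (M a b)) (Re (M a b)))).

Lemma Kb_ge0 M : 0 <= Kb M.
Proof. by apply: sumr_ge0 => a _; rewrite addr_ge0 ?ip_ge0. Qed.

Lemma mapp_bound M v : ip (mapp M v) (mapp M v) <= Kb M * ip v v.
Proof.
rewrite /Kb mulr_suml; apply: ler_sum => a _.
rewrite mulrDl -!expr2 Re_mapp Im_mapp.
by apply: lerD; apply: CS.
Qed.

Lemma mapp_scale M t v : mapp M (vsc t v) = vsc t (mapp M v).
Proof.
apply: boolp.funext => a; rewrite /mapp /vsc mulr_sumr; apply: eq_bigr => b _.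
by rewrite mulrCA.
Qed.

Lemma opnorm_has_sup M :
  has_sup [set x : R | exists v : J -> C,
         cnorm2 v <= 1 /\ x = Num.sqrt (cnorm2 (fun a => \sum_(b : J) M a b * v b))].
Proof.
split.
  exists (Num.sqrt (cnorm2 (fun a => \sum_(b : J) M a b * (fun _ => 0 : C) b))).
  exists (fun _ => 0); split => //.
  by rewrite /cnorm2 big1 // => a _; rewrite expr0n /= addr0.
exists (Num.sqrt (Kb M)) => x [v [v1 ->]].
rewrite ler_sqrt ?Kb_ge0 //.
have := mapp_bound M v; rewrite -cnorm2E -!cnorm2E => h.
apply: le_trans h _; rewrite ler_piMr ?Kb_ge0 //.
Qed.

Lemma opnorm_ub M v : cnorm2 v <= 1 -> nv (mapp M v) <= opnorm M.
Proof.
move=> v1; apply: (ub_le_sup (opnorm_has_sup M).2).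
by exists v.
Qed.

Lemma opnorm_ge0 M : 0 <= opnorm M.
Proof.
apply: le_trans (opnorm_ub M (v := fun _ => 0) _); first exact: nv_ge0.
by rewrite /cnorm2 big1 // => a _; rewrite expr0n /= addr0.
Qed.

Lemma opnorm_app M v : nv (mapp M v) <= opnorm M * nv v.
Proof.
have [e0|ne0] := eqVneq (nv v) 0.
  have ip0 : ip v v = 0.
    by apply/eqP; rewrite eq_le ip_ge0 andbT -sqrtr_eq0 -cnorm2E; apply/eqP.
  rewrite e0 mulr0; apply: le_nv => //; rewrite expr0n /=.
  by have := mapp_bound M v; rewrite ip0 mulr0.
have np : 0 < nv v by rewrite lt0r ne0 nv_ge0.
have h1 : cnorm2 (vsc (nv v)^-1 v) <= 1.
  rewrite cnorm2E ipZl ipZr mulrA -expr2 -nv_sqr exprVn mulVf //.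
  by rewrite expf_neq0.
have h := opnorm_ub M h1.
rewrite mapp_scale nvZ ger0_norm ?invr_ge0 ?nv_ge0 // in h.
by rewrite -ler_pdivrMr // mulrC.
Qed.

Lemma opnorm_le M c : 0 <= c -> (forall v, nv (mapp M v) <= c * nv v) -> opnorm M <= c.
Proof.
move=> c0 h; apply: ge_sup; first exact: (opnorm_has_sup M).1.
move=> x [v [v1 ->]].
apply: le_trans (h v) _.
rewrite ler_piMr // /nv -sqrtr1 ler_sqrt //.
Qed.

End Op.

Lemma mappD (I J : finType) (M : I -> J -> C) u w : mapp M (vadd u w) = vadd (mapp M u) (mapp M w).
Proof.
apply: boolp.funext => a; rewrite /mapp /vadd -big_split; apply: eq_bigr => b _.
by rewrite mulrDr.
Qed.

Lemma ip_adj (I J : finType) (M : I -> J -> C) z y : ip (mapp M z) y = ip z (mapp (cadj M) y).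
Proof.
rewrite /ip.
under eq_bigr => a _ do rewrite Re_sum Im_sum mulr_suml mulr_suml -big_split.
rewrite exchange_big /=; apply: eq_bigr => b _.
rewrite Re_sum Im_sum mulr_sumr mulr_sumr -big_split; apply: eq_bigr => a _ /=.
rewrite /cadj !ReM !ImM Reconj Imconj; ring.
Qed.

Lemma cadjK (I J : finType) (M : I -> J -> C) : cadj (cadj M) = M.
Proof. by apply: boolp.funext => a; apply: boolp.funext => b; rewrite /cadj conjcK. Qed.

Lemma ip_adj' (I J : finType) (M : I -> J -> C) y z : ip (mapp (cadj M) y) z = ip y (mapp M z).
Proof. by rewrite ip_adj cadjK. Qed.

Lemma nv_sq_le (I : finType) (u : I -> C) s : ip u u <= s ^+ 2 -> 0 <= s -> nv u <= s.
Proof. by move=> h s0; apply: le_nv. Qed.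

Lemma adj_bound (I J : finType) (M : I -> J -> C) y : nv (mapp (cadj M) y) <= opnorm M * nv y.
Proof.
set z := mapp (cadj M) y.
have h : nv z ^+ 2 <= nv y * (opnorm M * nv z).
  rewrite nv_sqr {2}/z ip_adj'.
  apply: le_trans (CS' _ _) _.
  by rewrite ler_wpM2l ?nv_ge0 // opnorm_app.
have [e0|ne0] := eqVneq (nv z) 0.
  by rewrite e0 mulr_ge0 ?opnorm_ge0 ?nv_ge0.
have np : 0 < nv z by rewrite lt0r ne0 nv_ge0.
nra.
Qed.

Section Main.
Variables (K K' L : finType).
Variables (Xb : K -> K' -> C) (U : K -> L -> C) (E : K -> K -> C) (W : K -> L -> C).
Variable mu : R.

Lemma term1 (v : L -> C) (x : R) : 0 <= x -> opnorm U <= 3 * x -> 0 < mu -> 3 * (mu * (9 * x ^+ 2)) <= 1 ->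
  nv (vadd (mapp U v) (vsc (- mu) (mapp U (mapp (cadj U) (mapp U v)))))
   <= 3 * x * (1 - mu * (9 * x ^+ 2)) * nv v.
Proof.
move=> x0 hU mu0 hmu.
set a := 9 * x ^+ 2.
have a0 : 0 <= a by rewrite /a mulr_ge0 // sqr_ge0.
have hmu' : 3 * (mu * a) <= 1 by [].
have QA z : ip (mapp U z) (mapp U z) <= a * ip z z.
  have h := le_trans (opnorm_app U z) (ler_wpM2r (nv_ge0 z) hU).
  rewrite -!nv_sqr /a.
  have -> : 9 * x ^+ 2 * nv z ^+ 2 = (3 * x * nv z) ^+ 2 by ring.
  by rewrite !expr2 ler_pM ?nv_ge0.
set y := mapp U v; set g := mapp (cadj U) y; set h := mapp (cadj U) (mapp U g).
have -> : vadd y (vsc (- mu) (mapp U g)) = mapp U (vadd v (vsc (- mu) g)) by rewrite mappD mapp_scale.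
have q0 : 0 <= 1 - mu * a by rewrite /a; lra.
apply: le_nv; first by rewrite !mulr_ge0 ?nv_ge0.
rewrite ip_adj mappD mapp_scale mappD mapp_scale -/y -/g -/h.
rewrite !ipDl !ipDr !ipZl !ipZr.
have ivh : ip v h = ip g g.
  by rewrite /h -ip_adj ipC ip_adj.
have G1e : ip y y = ip v g by rewrite /y /g ip_adj.
have Q1 := QA v; rewrite G1e in Q1.
set p := vadd (vsc a v) (vsc (-1) g).
have P0 := ip_ge0 p.
rewrite /p !ipDl !ipDr !ipZl !ipZr (ipC g v) in P0.
have Q2 := QA p.
rewrite ip_adj /p !mappD !mapp_scale -/y -/g -/h in Q2.
rewrite !ipDl !ipDr !ipZl !ipZr ivh (ipC g v) in Q2.
rewrite ivh.
have -> : (3 * x * (1 - mu * a) * nv v) ^+ 2 = a * (1 - mu * a) ^+ 2 * nv v ^+ 2 by rewrite /a; ring.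
rewrite -nv_sqr in Q1 P0 Q2.
set V := nv v ^+ 2 in Q1 P0 Q2 *.
set G1 := ip v g in Q1 P0 Q2 *.
set G2 := ip g g in Q1 P0 Q2 *.
set G3 := ip g h in Q1 P0 Q2 *.
have h1 : 0 <= (1 - mu * a) * (1 - 3 * mu * a) * (a * V - G1).
  by rewrite !mulr_ge0 // subr_ge0 //; lra.
have h2 : 0 <= mu * (2 - 3 * mu * a) * (a ^+ 2 * V - 2 * a * G1 + G2).
  rewrite !mulr_ge0 //; [exact: ltW | lra | lra].
have h3 : 0 <= mu ^+ 2 * (a * (a ^+ 2 * V - 2 * a * G1 + G2) - (a ^+ 2 * G1 - 2 * a * G2 + G3)).
  rewrite mulr_ge0 ?sqr_ge0 //; lra.
lra.
Qed.

Lemma main_abstract :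
  opnorm U <= 3 * opnorm Xb -> 0 < mu -> 3 * (mu * (9 * opnorm Xb ^+ 2)) <= 1 ->
  opnorm E <= opnorm Xb ^+ 2 ->
  (forall v, mapp W v = vadd (vadd (mapp U v) (vsc (- mu) (mapp U (mapp (cadj U) (mapp U v)))))
       (vadd (vsc mu (mapp Xb (mapp (cadj Xb) (mapp U v)))) (vsc mu (mapp E (mapp U v))))) ->
  opnorm W <= 3 * opnorm Xb.
Proof.
move=> hU mu0 hmu hE hW.
set x := opnorm Xb in hU hmu hE *.
have x0 : 0 <= x by exact: opnorm_ge0.
apply: opnorm_le; first by rewrite mulr_ge0.
move=> v; rewrite hW.
have T1 := term1 v x0 hU mu0 hmu.
set y := mapp U v in T1 *.
have hy : nv y <= 3 * x * nv v := le_trans (opnorm_app U v) (ler_wpM2r (nv_ge0 v) hU).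
have T2 : nv (mapp Xb (mapp (cadj Xb) y)) <= x * (x * nv y).
  apply: le_trans (opnorm_app _ _) _; rewrite ler_wpM2l //; exact: adj_bound.
have T3 : nv (mapp E y) <= x ^+ 2 * nv y.
  apply: le_trans (opnorm_app _ _) _; rewrite ler_wpM2r ?nv_ge0 //.
apply: le_trans (nv_tri _ _) _.
apply: le_trans (lerD T1 (nv_tri _ _)) _.
rewrite !nvZ !ger0_norm ?(ltW mu0) //.
have ny0 := nv_ge0 y.
have nv0 := nv_ge0 v.
have e1 : mu * nv (mapp Xb (mapp (cadj Xb) y)) <= mu * (x * (x * (3 * x * nv v))).
  rewrite ler_wpM2l ?(ltW mu0) //; apply: le_trans T2 _.
  by rewrite ler_wpM2l // ler_wpM2l.
have e2 : mu * nv (mapp E y) <= mu * (x ^+ 2 * (3 * x * nv v)).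
  rewrite ler_wpM2l ?(ltW mu0) //; apply: le_trans T3 _.
  by rewrite ler_wpM2l // sqr_ge0.
have e3 : 0 <= mu * x ^+ 3 * nv v by rewrite !mulr_ge0 ?exprn_ge0 // ltW.
have : 3 * x * (1 - mu * (9 * x ^+ 2)) * nv v + (mu * (x * (x * (3 * x * nv v))) + mu * (x ^+ 2 * (3 * x * nv v)))
   <= 3 * x * nv v.
  have -> : 3 * x * (1 - mu * (9 * x ^+ 2)) * nv v + (mu * (x * (x * (3 * x * nv v))) + mu * (x ^+ 2 * (3 * x * nv v)))
     = 3 * x * nv v - 21 * (mu * x ^+ 3 * nv v) by ring.
  lra.
lra.
Qed.

End Main.

Lemma ceq (z w : C) : Re z = Re w -> Im z = Im w -> z = w.
Proof. by case: z; case: w => /= a b c d -> ->. Qed.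

Section Omega.
Variable k : nat.
Hypothesis k0 : (0 < k)%N.

Lemma omegaD s t : omega R k (s + t) = omega R k s * omega R k t.
Proof.
apply: ceq; rewrite ?ReM ?ImM /omega /= natrD mulrDr mulrDl ?cosD ?sinD; ring.
Qed.

Lemma omega0 : omega R k 0 = 1.
Proof. by apply: ceq; rewrite /omega /= mulr0 mul0r ?cos0 ?sin0 ?oppr0. Qed.

Lemma omegak : omega R k k = 1.
Proof.
have e : 2 * pi * k%:R / k%:R = pi *+ 2 :> R.
  by rewrite mulfK ?pnatr_eq0 -?lt0n // mulr_natl.
by apply: ceq; rewrite /omega /= e ?cos2pi ?sin2pi ?oppr0.
Qed.

Lemma omega_mulk q : omega R k (q * k) = 1.
Proof. elim: q => [|q IH]; first by rewrite mul0n omega0. by rewrite mulSn omegaD IH omegak mulr1. Qed.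

Lemma omega_mod t : omega R k t = omega R k (t %% k).
Proof. by rewrite {1}(divn_eq t k) omegaD omega_mulk mul1r. Qed.

Lemma omega_conj t : conjc (omega R k t) * omega R k t = 1.
Proof.
rewrite /omega; set c := cos _; set s := sin _.
have h : c ^+ 2 + s ^+ 2 = 1 by rewrite /c /s cos2Dsin2.
clearbody c s.
apply: ceq; rewrite ?ReM ?ImM /=.
  rewrite -h; ring.
ring.
Qed.

End Omega.

Definition cadd (k : nat) (l l' : 'I_k) : 'I_k := Ordinal (ltn_pmod (l + l') (ord_pos l)).

Lemma circsub_cadd k (l l' : 'I_k) : circsub (cadd l l') l = l'.
Proof.
apply: val_inj => /=.
have lk := ltn_ord l; have lk' := ltn_ord l'.
rewrite -addnBA; last exact: ltnW.
rewrite modnDml.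
have -> : (l + l' + (k - l) = l' + k)%N by rewrite addnAC subnKC ?(ltnW lk) // addnC.
by rewrite modnDr modn_small.
Qed.

End Lin.

Section Lin2.
Variable R : realType.
Notation C := (R[i]).
Local Notation Re := (@complex.Re R).
Local Notation Im := (@complex.Im R).
Lemma cadd_inj k (l : 'I_k) : injective (cadd l).
Proof.
move=> a b /(congr1 val) /= /eqP.
by rewrite eqn_modDl !modn_small // => /eqP /val_inj.
Qed.
Lemma circnegK k : involutive (@circneg k).
Proof.
move=> [m lk]; apply: val_inj => /=.
case: m lk => [|m] lk.
  by rewrite subn0 modnn subn0 modnn.
have h1 : (k - m.+1 < k)%N by rewrite ltn_subrL ltn0Sn /= (ltn_trans (ltn0Sn m) lk).
rewrite (modn_small h1).
have h2 : (k - (k - m.+1))%N = m.+1 by rewrite subKn // ltnW.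
by rewrite h2 modn_small.
Qed.
Lemma omega_cadd k (j l l' : 'I_k) : omega R k (j * cadd l l') = omega R k (j * l) * omega R k (j * l').
Proof.
have k0 := ord_pos j.
have -> : nat_of_ord (cadd l l') = ((l + l') %% k)%N by [].
by rewrite (omega_mod _ k0) modnMmr -(omega_mod _ k0 (j * (l + l'))) mulnDr (omegaD R k (j * l) (j * l')).
Qed.

Lemma omega_neg k (j l : 'I_k) : omega R k (j * circneg l) = conjc (omega R k (j * l)).
Proof.
have k0 := ord_pos j.
have lk := ltn_ord l.
have -> : nat_of_ord (circneg l) = ((k - l) %% k)%N by [].
rewrite (omega_mod _ k0) modnMmr -(omega_mod _ k0 (j * (k - l))).
have h : omega R k (j * (k - l)) * omega R k (j * l) = 1.
  rewrite -(omegaD R k (j * (k - l)) (j * l)) -mulnDr subnK; last exact: ltnW.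
  exact: (omega_mulk _ k0).
have nz : omega R k (j * l) != 0.
  apply/eqP => e; move: h; rewrite e mulr0 => /eqP; rewrite eq_sym oner_eq0 //.
apply: (mulIf nz); rewrite h.
by rewrite (omega_conj R k (j * l)).
Qed.
Lemma fslice_tprod n p q k (A : tensor R n p k) (B : tensor R p q k) j i i' :
  fslice (tprod A B) j i i' = \sum_(c < p) fslice A j i c * fslice B j c i'.
Proof.
rewrite /fslice /tprod.
under eq_bigr => j' _ do rewrite summxE rmorph_sum mulr_suml.
rewrite exchange_big /=.
under eq_bigr => l _ do rewrite (reindex_inj (cadd_inj (l:=l))) /=.
under eq_bigr => l _ do under eq_bigr => l' _ do rewrite circsub_cadd omega_cadd mxE rmorph_sum mulr_suml.
under eq_bigr => l _ do rewrite exchange_big /=.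
rewrite exchange_big /=.
apply: eq_bigr => c _.
rewrite mulr_suml; apply: eq_bigr => l _.
rewrite mulr_sumr; apply: eq_bigr => l' _.
rewrite rmorphM; ring.
Qed.
Lemma conjD (x y : C) : conjc (x + y) = conjc x + conjc y.
Proof. by apply: ceq; rewrite ?ReD ?ImD ?Reconj ?Imconj ?ReD ?ImD // opprD. Qed.
Lemma conjM (x y : C) : conjc (x * y) = conjc x * conjc y.
Proof.
case: x => a b; case: y => c d; apply: ceq.
  by change (a * c - b * d = a * c - (- b) * (- d)); ring.
by change (- (a * d + b * c) = a * (- d) + (- b) * c); ring.
Qed.
Lemma conj_sum (I : finType) (F : I -> C) : conjc (\sum_i F i) = \sum_i conjc (F i).
Proof. apply: (big_morph _ conjD); by apply: ceq; rewrite /= ?oppr0. Qed.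
Lemma conjR (x : R) : conjc (real_complex R x) = real_complex R x.
Proof. by apply: ceq; rewrite ?Reconj ?Imconj //= oppr0. Qed.

Lemma fslice_ttr n m k (A : tensor R n m k) j i i' :
  fslice (ttr A) j i i' = conjc (fslice A j i' i).
Proof.
rewrite /fslice /ttr (reindex_inj (inv_inj (@circnegK k))) /=.
rewrite conj_sum; apply: eq_bigr => l _.
by rewrite circnegK mxE omega_neg conjM conjR.
Qed.
End Lin2.

Section Lin3.
Variable R : realType.
Notation C := (R[i]).
Local Notation Re := (@complex.Re R).
Local Notation Im := (@complex.Im R).
Lemma fslice_tadd n m k (A B : tensor R n m k) j i i' :
  fslice (tadd A B) j i i' = fslice A j i i' + fslice B j i i'.
Proof. rewrite /fslice /tadd -big_split; apply: eq_bigr => l _; by rewrite mxE raddfD mulrDl. Qed.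

Lemma fslice_tsub n m k (A B : tensor R n m k) j i i' :
  fslice (tsub A B) j i i' = fslice A j i i' - fslice B j i i'.
Proof. rewrite /fslice /tsub -sumrB; apply: eq_bigr => l _; by rewrite !mxE raddfB mulrBl. Qed.

Lemma fslice_tscale n m k a (A : tensor R n m k) j i i' :
  fslice (tscale a A) j i i' = real_complex R a * fslice A j i i'.
Proof. rewrite /fslice /tscale mulr_sumr; apply: eq_bigr => l _; by rewrite mxE rmorphM mulrA. Qed.

Lemma fslice_tid n k j (i i' : 'I_n) : fslice (@tid R n k) j i i' = (i == i')%:R.
Proof.
have k0 := ord_pos j.
rewrite /fslice (bigD1 (Ordinal k0)) //= big1 ?addr0.
  by rewrite /tid /= mxE muln0 omega0 mulr1 rmorph_nat.
move=> l /eqP ne; rewrite /tid.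
have -> : (nat_of_ord l == 0%N) = false.
  by apply/eqP => e; apply: ne; apply: val_inj.
by rewrite mxE rmorph0 mul0r.
Qed.

Lemma sum_pair (k p : nat) (F : 'I_k * 'I_p -> C) :
  \sum_(b : 'I_k * 'I_p) F b = \sum_(b1 < k) \sum_(b2 < p) F (b1, b2).
Proof. by rewrite pair_big; apply: eq_bigr => -[]. Qed.

Lemma tbar_mapp n p k (T : tensor R n p k) (v : 'I_k * 'I_p -> C) a :
  mapp (tbar T) v a = \sum_(c < p) fslice T a.1 a.2 c * v (a.1, c).
Proof.
rewrite /mapp /tbar sum_pair (bigD1 a.1) //=.
rewrite [X in _ + X]big1 ?addr0.
  by apply: eq_bigr => c _; rewrite eqxx.
by move=> l ne; apply: big1 => c _; rewrite eq_sym (negbTE ne) mul0r.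
Qed.
Lemma mapp_tprod n p q k (A : tensor R n p k) (B : tensor R p q k) v :
  mapp (tbar (tprod A B)) v = mapp (tbar A) (mapp (tbar B) v).
Proof.
apply: boolp.funext => a; rewrite !tbar_mapp.
under eq_bigr => c _ do rewrite fslice_tprod mulr_suml.
rewrite exchange_big /=; apply: eq_bigr => c _.
rewrite tbar_mapp /= mulr_sumr; apply: eq_bigr => c' _.
by rewrite mulrA.
Qed.

Lemma tbar_ttr n m k (A : tensor R n m k) : tbar (ttr A) = cadj (tbar A).
Proof.
apply: boolp.funext => a; apply: boolp.funext => b.
rewrite /tbar /cadj eq_sym; case: eqP => [e|_].
  by rewrite fslice_ttr e.
by apply: ceq; rewrite //= oppr0.
Qed.

Lemma mapp_tadd n m k (A B : tensor R n m k) v :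
  mapp (tbar (tadd A B)) v = vadd (mapp (tbar A) v) (mapp (tbar B) v).
Proof.
apply: boolp.funext => a; rewrite /vadd !tbar_mapp -big_split; apply: eq_bigr => c _.
by rewrite fslice_tadd mulrDl.
Qed.

Lemma mapp_tsub n m k (A B : tensor R n m k) v :
  mapp (tbar (tsub A B)) v = vadd (mapp (tbar A) v) (vsc (-1) (mapp (tbar B) v)).
Proof.
apply: boolp.funext => a; rewrite /vadd /vsc !tbar_mapp rmorphN1 mulN1r -sumrN -big_split.
by apply: eq_bigr => c _; rewrite fslice_tsub mulrBl.
Qed.

Lemma mapp_tscale n m k t (A : tensor R n m k) v :
  mapp (tbar (tscale t A)) v = vsc t (mapp (tbar A) v).
Proof.
apply: boolp.funext => a; rewrite /vsc !tbar_mapp mulr_sumr; apply: eq_bigr => c _.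
by rewrite fslice_tscale mulrA.
Qed.

Lemma mapp_tid n k v : mapp (tbar (@tid R n k)) v = v.
Proof.
apply: boolp.funext => a; rewrite tbar_mapp (bigD1 a.2) //= [X in _ + X]big1 ?addr0.
  by rewrite fslice_tid eqxx mul1r; case: a.
by move=> c ne; rewrite fslice_tid eq_sym (negbTE ne) mul0r.
Qed.
End Lin3.

Unset Implicit Arguments.

Theorem lemma16 (R : realType) (n r p k m : nat)
  (As : 'I_m -> tensor R n n k) (X : tensor R n r k)
  (Ut Ut1 : tensor R n p k) (mu : R) :
  (forall i, tsym (As i)) ->
  Ut1 = tprod (tadd (@tid R n k)
                    (tscale mu (AstarA As (tsub (tprod X (ttr X)) (tprod Ut (ttr Ut))))))
              Ut ->
  0 < mu ->
  tnorm Ut <= 3 * tnorm X ->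
  mu <= 27^-1 * (tnorm X) ^- 2 ->
  tnorm (tsub (AstarA As (tsub (tprod X (ttr X)) (tprod Ut (ttr Ut))))
              (tsub (tprod X (ttr X)) (tprod Ut (ttr Ut)))) <= (tnorm X) ^+ 2 ->
  tnorm Ut1 <= 3 * tnorm X.
Proof.
move=> _ -> mu0 hU hmu hE.
set D := tsub (tprod X (ttr X)) (tprod Ut (ttr Ut)) in hE *.
set AD := AstarA As D in hE *.
rewrite /tnorm in hU hmu hE *.
set x := opnorm (tbar X) in hU hmu hE *.
apply: (@main_abstract R _ _ _ (tbar X) (tbar Ut) (tbar (tsub AD D)) _ mu) => //.
  have x0 : 0 <= x by exact: opnorm_ge0.
  have [xe|xne] := eqVneq x 0.
    by move: hmu; rewrite xe expr0n /= invr0 mulr0 => h; exfalso; lra.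
  have x2 : 0 < x ^+ 2 by rewrite exprn_gt0 // lt0r xne x0.
  have h := ler_wpM2r (ltW x2) hmu.
  rewrite -mulrA mulVf ?gt_eqF // mulr1 in h.
  have h2 := ler_wpM2l (ler0n _ 27) h.
  rewrite mulfV ?pnatr_eq0 // in h2.
  have h3 : 3 * (mu * (9 * x ^+ 2)) <= 1 by lra.
  exact: h3.
move=> v.
rewrite mapp_tprod mapp_tadd mapp_tid mapp_tscale.
set y := mapp (tbar Ut) v.
have hAD : mapp (tbar AD) y = vadd (mapp (tbar (tsub AD D)) y) (mapp (tbar D) y).
  rewrite mapp_tsub; apply: boolp.funext => a; rewrite /vadd /vsc rmorphN1; ring.
rewrite hAD !mapp_tsub !mapp_tprod !tbar_ttr.
apply: boolp.funext => a; rewrite /vadd /vsc rmorphN1 rmorphN; ring.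
Qed.
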